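(* Let $S$ be a finite set with labelling $\ell:S\to L$. For all transition functions $\sigma,\tau:S\to\mathcal{D}(S)$ and every $S^2_\Delta$-closed policy $P\in\mathcal{P}_\sigma$, there exists an $S^2_\Delta$-closed policy $Q\in\mathcal{P}_\tau$ such that $d_F(P,Q)\le 2\,d_F(\sigma,\tau)$.
   Context: $\mathcal{D}(Y)$ = probability distributions on $Y$; $\Omega(\mu,\nu)$ = couplings of $\mu,\nu$ (distributions on $S\times S$ with marginals $\mu,\nu$). $S^2_\Delta=\{(s,s)\mid s\in S\}$, $S^2_1=\{(s,t)\mid\ell(s)\ne\ell(t)\}$. For a transition function $\tau$, $\mathcal{P}_\tau$ is the set of maps $P:S\times S\to\mathcal{D}(S\times S)$ with $P(s,t)\in\Omega(\tau(s),\tau(t))$ for $(s,t)\notin S^2_1$ and $P(s,t)$ the point mass at $(s,t)$ for $(s,t)\in S^2_1$. $P$ is $S^2_\Delta$-closed if $\mathrm{support}(P(s,s))\subseteq S^2_\Delta$ for all $s$. For distributions $\alpha,\beta$ on a finite set $Y$, $d_{TV}(\alpha,\beta)=\max_{y}|\alpha(y)-\beta(y)|$; for functions $f,g$ with values in distributions, $d_F(f,g)=\max_x d_{TV}(f(x),g(x))$ (so $d_F(\sigma,\tau)=\max_{s}d_{TV}(\sigma(s),\tau(s))$ and $d_F(P,Q)=\max_{(s,t)}d_{TV}(P(s,t),Q(s,t))$). *)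

(* Defs.v *)
From mathcomp Require Import all_boot all_order all_algebra.
From mathcomp Require Import reals.
Set Implicit Arguments. Unset Strict Implicit. Unset Printing Implicit Defensive.
Import Order.TTheory GRing.Theory Num.Theory.
Local Open Scope ring_scope.

Section Defs.
Variable R : realType.

Definition is_dist (Y : finType) (a : {ffun Y -> R}) : Prop :=
  (forall y, 0 <= a y) /\ \sum_(y : Y) a y = 1.

Definition is_coupling (S : finType) (mu nu : {ffun S -> R})
    (w : {ffun (S * S)%type -> R}) : Prop :=
  is_dist w /\
  (forall s, \sum_(t : S) w (s, t) = mu s) /\
  (forall t, \sum_(s : S) w (s, t) = nu t).

Definition dirac (Y : finType) (y0 : Y) : {ffun Y -> R} :=
  [ffun y => if y == y0 then 1 else 0].

Definition S2_1 (S : finType) (L : eqType) (l : S -> L) (p : S * S) : bool :=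
  l p.1 != l p.2.

Definition is_policy (S : finType) (L : eqType) (l : S -> L)
    (tau : S -> {ffun S -> R}) (P : S * S -> {ffun (S * S)%type -> R}) : Prop :=
  forall s t,
    (~~ S2_1 l (s, t) -> is_coupling (tau s) (tau t) (P (s, t))) /\
    (S2_1 l (s, t) -> P (s, t) = dirac (s, t)).

Definition diag_closed (S : finType) (P : S * S -> {ffun (S * S)%type -> R}) : Prop :=
  forall s u v, P (s, s) (u, v) != 0 -> u = v.

(* Total variation distance, as defined in the paper: max pointwise difference. *)
Definition dTV (Y : finType) (a b : {ffun Y -> R}) : R :=
  \big[Num.max/0]_(y : Y) `|a y - b y|.

Definition dF (X Y : finType) (f g : X -> {ffun Y -> R}) : R :=
  \big[Num.max/0]_(x : X) dTV (f x) (g x).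

Definition is_transition (S : finType) (tau : S -> {ffun S -> R}) : Prop :=
  forall s, is_dist (tau s).

End Defs.

(* Main.v *)
Require Import Defs.
From mathcomp Require Import all_boot all_order all_algebra.
From mathcomp Require Import reals.
From mathcomp Require Import lra.
Set Implicit Arguments. Unset Strict Implicit. Unset Printing Implicit Defensive.
Import Order.TTheory GRing.Theory Num.Theory.
Local Open Scope ring_scope.

Section Fix.
Variables (R : realType) (S : finType).

Definition pos (x : R) := if 0 <= x then x else 0.
Lemma pos_ge0 x : 0 <= pos x.
Proof. rewrite /pos; case: ifP => // /negbT; lra. Qed.
Lemma pos_le x e : `|x| <= e -> pos x <= e.
Proof. rewrite /pos ler_norml => /andP[h1 h2]; case: ifP => // /negbT; lra. Qed.
Lemma pos_sub x : pos x - pos (- x) = x.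
Proof. rewrite /pos; case: ifP => /= h; case: ifP => h'; move: h h'; lra. Qed.
Lemma min_pos x y : Num.min x y + pos (x - y) = x.
Proof. rewrite /pos; have [h|h] := lerP x y; case: ifP => h'; move: h h'; lra. Qed.
Lemma min_pos' x y : Num.min x y + pos (y - x) = y.
Proof. rewrite /pos; have [h|h] := lerP x y; case: ifP => h'; move: h h'; lra. Qed.

Definition nonneg (w : {ffun (S * S)%type -> R}) := forall p, 0 <= w p.
Definition rows (w : {ffun (S * S)%type -> R}) (m : {ffun S -> R}) :=
  forall u, \sum_v w (u, v) = m u.
Definition cols (w : {ffun (S * S)%type -> R}) (m : {ffun S -> R}) :=
  forall v, \sum_u w (u, v) = m v.

Definition Zf (m m' : {ffun S -> R}) := \sum_u pos (m u - m' u).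
Definition af (m m' : {ffun S -> R}) u := Num.min (m u) (m' u) / m u.
Definition df (m m' : {ffun S -> R}) u := pos (m u - m' u) / m u.
Definition gf (m m' : {ffun S -> R}) u := pos (m' u - m u) / Zf m m'.
Definition Sv m m' (w : {ffun (S * S)%type -> R}) v := \sum_u w (u, v) * df m m' u.
Definition rowfix m m' (w : {ffun (S * S)%type -> R}) : {ffun (S * S)%type -> R} :=
  [ffun p => w p * af m m' p.1 + gf m m' p.1 * Sv m m' w p.2].

Lemma single_le (w : {ffun (S * S)%type -> R}) (m : {ffun S -> R}) u v :
  nonneg w -> rows w m -> w (u, v) <= m u.
Proof.
move=> hn hr; rewrite -hr (bigD1 v) //= lerDl sumr_ge0 // => i _; exact: hn.
Qed.

Lemma rowfix_spec (m m' n : {ffun S -> R}) (w : {ffun (S * S)%type -> R}) (e : R) :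
  nonneg w -> rows w m -> cols w n ->
  (forall u, 0 <= m u) -> (forall u, 0 <= m' u) -> \sum_u m u = \sum_u m' u ->
  (forall u, `|m u - m' u| <= e) ->
  [/\ nonneg (rowfix m m' w), rows (rowfix m m' w) m', cols (rowfix m m' w) n &
      forall p, `|rowfix m m' w p - w p| <= e].
Proof.
move=> hn hr hc hm hm' hs he.
set Z := Zf m m'.
have Zge0 : 0 <= Z by apply: sumr_ge0 => u _; exact: pos_ge0.
have F2 : \sum_u pos (m' u - m u) = Z.
  apply/eqP; rewrite -subr_eq0; apply/eqP.
  rewrite /Z /Zf -sumrB.
  under eq_bigr => u _ do rewrite -(opprB (m' u)) pos_sub.
  by rewrite sumrB hs subrr.
have F1 : forall u v, w (u, v) * (af m m' u + df m m' u) = w (u, v).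
  move=> u v; have [h0|h0] := eqVneq (m u) 0.
    have : w (u, v) = 0.
      by apply/eqP; rewrite eq_le hn andbT -h0 (@single_le w m u v hn hr).
    by move=> ->; rewrite mul0r.
  by rewrite /af /df -mulrDl min_pos divff // mulr1.
have F3 : forall u, m u * df m m' u = pos (m u - m' u).
  move=> u; have [h0|h0] := eqVneq (m u) 0.
    rewrite h0 mul0r sub0r /pos; case: ifP => //; have := hm' u; lra.
  by rewrite /df mulrC divfK.
have F3' : forall u, m u * af m m' u = Num.min (m u) (m' u).
  move=> u; have [h0|h0] := eqVneq (m u) 0.
    by rewrite h0 mul0r min_l.
  by rewrite /af mulrC divfK.
have age0 : forall u, 0 <= af m m' u.
  move=> u; apply: divr_ge0 => //; rewrite le_min hm /=; exact: hm'.
have dge0 : forall u, 0 <= df m m' u by move=> u; apply: divr_ge0 => //; exact: pos_ge0.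
have gge0 : forall u, 0 <= gf m m' u by move=> u; apply: divr_ge0 => //; exact: pos_ge0.
have Svge0 : forall v, 0 <= Sv m m' w v.
  by move=> v; apply: sumr_ge0 => u _; apply: mulr_ge0.
have SvZ : forall v, Sv m m' w v <= Z.
  move=> v; apply: ler_sum => u _; rewrite -F3; apply: ler_wpM2r => //.
  exact: single_le hn hr.
have GZ : forall u, gf m m' u * Z = pos (m' u - m u).
  move=> u; have [hZ|hZ] := eqVneq Z 0.
    rewrite hZ mulr0; apply/esym.
    apply: (@psumr_eq0P _ _ predT (fun i => pos (m' i - m i))) => //.
      by move=> i _; exact: pos_ge0.
    by rewrite F2.
  by rewrite /gf divfK.
split.
- by case=> u v; rewrite ffunE /=; apply: addr_ge0; apply: mulr_ge0.
- move=> u; under eq_bigr => v _ do rewrite ffunE /=.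
  rewrite big_split /= -mulr_suml hr F3' -mulr_sumr.
  have -> : \sum_v Sv m m' w v = Z.
    rewrite /Sv exchange_big /=; apply: eq_bigr => u' _.
    by rewrite -mulr_suml hr F3.
  by rewrite GZ min_pos'.
- move=> v; under eq_bigr => u _ do rewrite ffunE /=.
  rewrite big_split /= -mulr_suml.
  have -> : (\sum_u gf m m' u) * Sv m m' w v = Sv m m' w v.
    have [hZ|hZ] := eqVneq Z 0.
      have -> : Sv m m' w v = 0.
        apply: big1 => u _; rewrite /df.
        have -> : pos (m u - m' u) = 0.
          apply: (@psumr_eq0P _ _ predT (fun i => pos (m i - m' i))) => //.
          by move=> i _; exact: pos_ge0.
        by rewrite mul0r mulr0.
      by rewrite mulr0.
    by rewrite /gf -mulr_suml F2 divff // mul1r.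
  rewrite -hc /Sv -big_split /=; apply: eq_bigr => u _.
  by rewrite -mulrDr F1.
- case=> u v; rewrite ffunE /=.
  have h1 : w (u, v) * af m m' u - w (u, v) = - (w (u, v) * df m m' u).
    by rewrite -{2}(F1 u v) mulrDr; lra.
  have a1 : 0 <= w (u, v) * df m m' u <= e.
    rewrite mulr_ge0 //=; apply: (le_trans (y := m u * df m m' u)).
      by apply: ler_wpM2r => //; exact: single_le hn hr.
    by rewrite F3; apply: pos_le.
  have a2 : 0 <= gf m m' u * Sv m m' w v <= e.
    rewrite mulr_ge0 //=; apply: (le_trans (y := gf m m' u * Z)).
      by apply: ler_wpM2l.
    by rewrite GZ; apply: pos_le; rewrite distrC.
  rewrite ler_norml; move: a1 a2 h1; move=> /andP[? ?] /andP[? ?] h1.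
  apply/andP; split; lra.
Qed.
End Fix.

Section Main.
Variables (R : realType) (S : finType).

Definition swapf (w : {ffun (S * S)%type -> R}) : {ffun (S * S)%type -> R} :=
  [ffun p => w (p.2, p.1)].
Definition dg (m : {ffun S -> R}) : {ffun (S * S)%type -> R} :=
  [ffun p => if p.1 == p.2 then m p.1 else 0].

Lemma swap_nonneg w : nonneg w -> nonneg (swapf w).
Proof. by move=> h p; rewrite ffunE. Qed.
Lemma swap_rows w (m : {ffun S -> R}) : cols w m -> rows (swapf w) m.
Proof. by move=> h u; rewrite -h; apply: eq_bigr => v _; rewrite ffunE. Qed.
Lemma swap_cols w (m : {ffun S -> R}) : rows w m -> cols (swapf w) m.
Proof. by move=> h u; rewrite -h; apply: eq_bigr => v _; rewrite ffunE. Qed.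

Lemma bigmax_le (I : finType) (F : I -> R) c :
  0 <= c -> (forall i, F i <= c) -> \big[Num.max/0]_i F i <= c.
Proof. by move=> h0 h; elim/big_ind: _ => // x y hx hy; rewrite ge_max hx hy. Qed.
Lemma le_bigmax (I : finType) (F : I -> R) i : F i <= \big[Num.max/0]_i F i.
Proof. by rewrite (bigD1 i) //= le_max lexx. Qed.
Lemma bigmax_ge0 (I : finType) (F : I -> R) : 0 <= \big[Num.max/0]_i F i.
Proof. by apply: (big_rec (fun x => 0 <= x)) => // i x _ hx; rewrite le_max hx orbT. Qed.

Lemma coupling_of (m n : {ffun S -> R}) w :
  is_dist m -> nonneg w -> rows w m -> cols w n -> is_coupling m n w.
Proof.
move=> [_ hm] hn hr hc; split; [split|split] => //.
rewrite -hm -[RHS](eq_bigr _ (fun u _ => hr u)) pair_bigA /=.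
by apply: eq_bigr; case.
Qed.
Lemma coupling_to (m n : {ffun S -> R}) w :
  is_coupling m n w -> [/\ nonneg w, rows w m & cols w n].
Proof. by move=> [[h1 _] [h2 h3]]. Qed.
End Main.

Theorem mainTheorem13 (R : realType) (S : finType) (L : eqType) (l : S -> L)
    (sigma tau : S -> {ffun S -> R})
    (Hsigma : is_transition sigma) (Htau : is_transition tau)
    (P : S * S -> {ffun (S * S)%type -> R})
    (HP : is_policy l sigma P) (HPd : diag_closed P) :
  exists Q : S * S -> {ffun (S * S)%type -> R},
    [/\ is_policy l tau Q, diag_closed Q & dF P Q <= 2 * dF sigma tau].
Proof.
set e := dF sigma tau.
have e0 : 0 <= e by apply: bigmax_ge0.
have he : forall s u, `|sigma s u - tau s u| <= e.
  move=> s u; apply: le_trans (le_bigmax _ s).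
  exact: (le_bigmax (fun u => `|sigma s u - tau s u|) u).
have hsum : forall s, \sum_u sigma s u = \sum_u tau s u.
  by move=> s; case: (Hsigma s) => _ ->; case: (Htau s) => _ ->.
have nnt : forall s u, 0 <= tau s u by move=> s u; case: (Htau s) => h _; exact: h.
have nns : forall s u, 0 <= sigma s u by move=> s u; case: (Hsigma s) => h _; exact: h.
pose W1 (p : S * S) := rowfix (sigma p.1) (tau p.1) (P p).
pose W2 (p : S * S) := swapf (rowfix (sigma p.2) (tau p.2) (swapf (W1 p))).
pose Q (p : S * S) := if S2_1 l p then dirac R p else
   if p.1 == p.2 then dg (tau p.1) else W2 p.
have key : forall s t, ~~ S2_1 l (s, t) ->
   [/\ nonneg (W2 (s, t)), rows (W2 (s, t)) (tau s), cols (W2 (s, t)) (tau t) &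
       forall y, `|W2 (s, t) y - P (s, t) y| <= 2 * e].
  move=> s t hl; have [hc _] := HP s t; have [n0 r0 c0] := coupling_to (hc hl).
  have [n1 r1 c1 d1] := rowfix_spec n0 r0 c0 (nns s) (nnt s) (hsum s) (he s).
  have [n2 r2 c2 d2] := rowfix_spec (swap_nonneg n1) (swap_rows c1) (swap_cols r1)
     (nns t) (nnt t) (hsum t) (he t).
  split.
  - exact: swap_nonneg.
  - by apply: swap_rows.
  - by apply: swap_cols.
  - case=> u v; rewrite /W2 ffunE /=.
    have h1 := d1 (u, v); have h2 := d2 (v, u); rewrite [swapf _ (v, u)]ffunE /= in h2.
    rewrite /W1; apply: (le_trans (ler_distD (rowfix (sigma s) (tau s) (P (s, t)) (u, v)) _ _)).
    have -> : 2 * e = e + e by lra.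
    exact: lerD h2 h1.
have dgc : forall (m : {ffun S -> R}), is_dist m -> is_coupling m m (dg m).
  move=> m hm; apply: coupling_of => //.
  - by case=> u v; rewrite ffunE /=; case: eqP => // _; case: hm.
  - move=> u; rewrite (bigD1 u) //= big1 ?addr0; first by rewrite ffunE /= eqxx.
    by move=> v /negPf hv; rewrite ffunE /= eq_sym hv.
  - move=> v; rewrite (bigD1 v) //= big1 ?addr0; first by rewrite ffunE /= eqxx.
    by move=> u /negPf hv; rewrite ffunE /= hv.
have Pdiag : forall s, P (s, s) = dg (sigma s).
  move=> s; have [hc _] := HP s s.
  have hl : ~~ S2_1 l (s, s) by rewrite /S2_1 /= eqxx.
  have [n0 r0 c0] := coupling_to (hc hl).
  have off : forall u v, u != v -> P (s, s) (u, v) = 0.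
    move=> u v huv; apply/eqP; apply/negPn/negP => h.
    by move: huv; rewrite (HPd _ _ _ h) eqxx.
  apply/ffunP; case=> u v; rewrite ffunE /=; case: eqP => [<-|/eqP huv]; last exact: off.
  rewrite -r0 (bigD1 u) //= big1 ?addr0 // => v' hv'; apply: off; by rewrite eq_sym.
exists Q; split.
- move=> s t; split => hl; rewrite /Q; last by rewrite hl.
  rewrite (negPf hl) /=; case: eqP => [<-|_]; first exact: dgc.
  have [n r c _] := key s t hl; apply: coupling_of => //; exact: Htau.
- move=> s u v; rewrite /Q /S2_1 /= !eqxx /= ffunE /=.
  by case: (eqVneq u v) => // _; rewrite eqxx.
- apply: bigmax_le; first by rewrite mulr_ge0.
  case=> s t; apply: bigmax_le; first by rewrite mulr_ge0.
  move=> y; rewrite /Q.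
  have [hl|hl] := boolP (S2_1 l (s, t)).
    have [_ hd] := HP s t; by rewrite (hd hl) subrr normr0 mulr_ge0.
  rewrite /=; case: eqP => [/= <-|_].
    rewrite Pdiag; case: y => u v; rewrite !ffunE /=; case: eqP => _.
      apply: le_trans (he s u) _; lra.
    by rewrite subrr normr0 mulr_ge0.
  have [_ _ _ hb] := key s t hl; by rewrite distrC.
Qed.
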